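(* The following rules are sound, i.e. for every instance, if all premisses are valid then the conclusion is valid ($\Gamma,\Delta$ arbitrary finite multisets of compound diagrams): (a) for a pure Euler diagram $d=(L,Z)$ such that every $z\in M(d)$ has some $\ell\in L$ with $\mathrm{adj}(z,\ell)\in M(d)$, and $\{c_1,\dots,c_k\}\subseteq L$ the maximal set of contours with $M(d\setminus c_i)\neq\emptyset$: $(\mathrm{red}L)$ from $d\setminus c_1,\dots,d\setminus c_k,\Gamma\Rightarrow\Delta$ infer $d,\Gamma\Rightarrow\Delta$; $(\mathrm{red}R)$ from $\Gamma\Rightarrow\Delta,d\setminus c_i$ for all $1\le i\le k$ infer $\Gamma\Rightarrow\Delta,d$; (b) for a pure Euler diagram $d=(L,Z)$ with $|M(d)|>1$ and pure Euler diagrams $d_1=(L,Z_1)$, $d_2=(L,Z_2)$ with $Z_1\cap Z_2=Z$: $(\mathrm{mzsep}L)$ from $d_1,d_2,\Gamma\Rightarrow\Delta$ infer $d,\Gamma\Rightarrow\Delta$; $(\mathrm{mzsep}R)$ from $\Gamma\Rightarrow\Delta,d_1$ and $\Gamma\Rightarrow\Delta,d_2$ infer $\Gamma\Rightarrow\Delta,d$; (c) for a pure Euler diagram $d$ with $M(d)=\{z\}$, $z=(\{n_1,\dots,n_k\},\{o_1,\dots,o_l\})$: $(\mathrm{impdec}L)$ from $d,\Gamma\Rightarrow P_{n_i}$ for all $1\le i\le k$ and $P_{o_j},\Gamma\Rightarrow\Delta$ for all $1\le j\le l$ infer $d,\Gamma\Rightarrow\Delta$; $(\mathrm{impdec}R)$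 from $P_{n_1},\dots,P_{n_k},\Gamma\Rightarrow P_{o_1},\dots,P_{o_l}$ infer $\Gamma\Rightarrow\Delta,d$.
   Context: Fix a countably infinite set $\mathcal V$ of propositional variables. A Heyting algebra $(H,\vee,\wedge,\to,0,1)$ is a bounded distributive lattice with a binary operation $\to$ such that $c\wedge a\le b\iff c\le a\to b$; $-a:=a\to0$; empty meets are $1$, empty joins $0$. A valuation is a map $v:\mathcal V\to H$. For a finite $L\subset\mathcal V$, a zone over $L$ is a pair $z=(\mathrm{in}(z),\mathrm{out}(z))$ of disjoint subsets of $L$ with union $L$; $\mathcal Z(L)$ is the set of all zones over $L$; $v(z)=\bigwedge_{c\in\mathrm{in}(z)}v(c)\wedge\bigwedge_{c\in\mathrm{out}(z)}-v(c)$ and $m_v(z)=\big(\bigwedge_{c\in\mathrm{in}(z)}v(c)\big)\to\big(\bigvee_{c\in\mathrm{out}(z)}v(c)\big)$. Unitary diagrams are of three kinds: Venn diagrams $d=(L,\mathcal Z(L),S)$, $S\subseteq\mathcal Z(L)$ shaded, $[\![d]\!]_v=\bigvee_{z\in S}v(z)$; pure Euler diagrams $d=(L,Z)$, $Z\subseteq\mathcal Z(L)$ visible zones, missing zones $M(d)=\mathcal Z(L)\setminus Z$, $[\![d]\!]_v=\bigwedge_{z\in M(d)}m_v(z)$; Euler–Venn diagrams $d=(L,Z,S)$, $S\subseteq Z\subseteq\mathcal Z(L)$, $[\![d]\!]_v=[\![(L,Z)]\!]_v\to[\![(L,\mathcal Z(L),S)]\!]_v$. Positive literal $P_c=(\{c\},\mathcal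 Z(\{c\}),\{(\{c\},\emptyset)\})$ (a Venn diagram). Compound diagrams are built from unitary ones with $\wedge,\vee,\to$, interpreted by meet, join and Heyting implication. For $c\in L$, $\mathrm{adj}(z,c)$ is the zone obtained from $z$ by moving $c$ from $\mathrm{out}(z)$ to $\mathrm{in}(z)$ or vice versa. Reduction: $z\setminus c=(\mathrm{in}(z)\setminus\{c\},\mathrm{out}(z)\setminus\{c\})$; for pure Euler $d=(L,Z)$, $d\setminus c=(L\setminus\{c\},\{z\setminus c:z\in Z\})$. A sequent $\Gamma\Rightarrow\Delta$ (finite multisets of compound diagrams) is valid iff for every Heyting algebra and valuation $v$, $\bigwedge_{D\in\Gamma}[\![D]\!]_v\le\bigvee_{E\in\Delta}[\![E]\!]_v$. *)

(* Defs.v *)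
From HB Require Import structures.
From mathcomp Require Import all_boot.
From mathcomp Require Import finmap.
Set Implicit Arguments. Unset Strict Implicit. Unset Printing Implicit Defensive.
Local Open Scope fset_scope.

Record heyting := Heyting {
  hcar :> Type;
  hle : hcar -> hcar -> Prop;
  hjoin : hcar -> hcar -> hcar;
  hmeet : hcar -> hcar -> hcar;
  himp : hcar -> hcar -> hcar;
  hbot : hcar;
  htop : hcar;
  hle_refl : forall a, hle a a;
  hle_trans : forall a b c, hle a b -> hle b c -> hle a c;
  hle_antisym : forall a b, hle a b -> hle b a -> a = b;
  hmeetP : forall a b c, hle c (hmeet a b) <-> (hle c a /\ hle c b);
  hjoinP : forall a b c, hle (hjoin a b) c <-> (hle a c /\ hle b c);
  hbot_least : forall a, hle hbot a;
  htop_greatest : forall a, hle a htop;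
  hdistr : forall a b c, hmeet a (hjoin b c) = hjoin (hmeet a b) (hmeet a c);
  himpP : forall a b c, hle (hmeet c a) b <-> hle c (himp a b)
}.

Definition hneg (H : heyting) (a : H) : H := himp a (hbot H).

Definition bigmeet (H : heyting) (T : Type) (s : seq T) (f : T -> H) : H :=
  foldr (fun x acc => hmeet (f x) acc) (htop H) s.
Definition bigjoin (H : heyting) (T : Type) (s : seq T) (f : T -> H) : H :=
  foldr (fun x acc => hjoin (f x) acc) (hbot H) s.

(* propositional variables (contour labels): the countably infinite set nat *)
Definition contour := nat.
Definition contours := {fset nat}.
Definition zone := ({fset nat} * {fset nat})%type.
Definition zin (z : zone) : {fset nat} := z.1.
Definition zout (z : zone) : {fset nat} := z.2.

Definition zones_over (L : contours) : {fset zone} :=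
  [fset ((A, L `\` A) : zone) | A in fpowerset L].

Definition adj (z : zone) (c : contour) : zone :=
  if c \in zin z then (zin z `\ c, c |` zout z) else (c |` zin z, zout z `\ c).

Definition zone_rem (z : zone) (c : contour) : zone := (zin z `\ c, zout z `\ c).

(* a pure Euler diagram (L, Z), Z the visible zones *)
Record euler := Euler { eL : contours; eZ : {fset zone} }.

Inductive unitary :=
  | UVenn of contours & {fset zone}                 (* (L, Z(L), S) *)
  | UEuler of euler
  | UEulerVenn of contours & {fset zone} & {fset zone}. (* (L, Z, S) *)

Inductive diagram :=
  | DUnit of unitary
  | DAnd of diagram & diagram
  | DOr of diagram & diagram
  | DImp of diagram & diagram.

Coercion DUnit : unitary >-> diagram.

Definition missing (d : euler) : {fset zone} := zones_over (eL d) `\` eZ d.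

Definition euler_rem (d : euler) (c : contour) : euler :=
  Euler (eL d `\ c) [fset zone_rem z c | z in eZ d].

Definition lit (c : contour) : diagram :=
  DUnit (UVenn [fset c] [fset (([fset c], fset0) : zone)]).

Definition pure (d : euler) : diagram := DUnit (UEuler d).

Definition wf_euler (d : euler) : bool := eZ d `<=` zones_over (eL d).

Definition wf_unitary (u : unitary) : bool :=
  match u with
  | UVenn L Sh => Sh `<=` zones_over L
  | UEuler d => wf_euler d
  | UEulerVenn L Zv Sh => (Sh `<=` Zv) && (Zv `<=` zones_over L)
  end.

Fixpoint wf_diagram (D : diagram) : bool :=
  match D with
  | DUnit u => wf_unitary u
  | DAnd D1 D2 | DOr D1 D2 | DImp D1 D2 => wf_diagram D1 && wf_diagram D2
  end.

Section Sem.
Variables (H : heyting) (v : contour -> H).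

Definition zone_val (z : zone) : H :=
  hmeet (bigmeet (enum_fset (zin z)) v)
        (bigmeet (enum_fset (zout z)) (fun c => hneg (v c))).

Definition mzone (z : zone) : H :=
  himp (bigmeet (enum_fset (zin z)) v) (bigjoin (enum_fset (zout z)) v).

Definition sem_venn (S : {fset zone}) : H := bigjoin (enum_fset S) zone_val.

Definition sem_euler (d : euler) : H := bigmeet (enum_fset (missing d)) mzone.

Definition sem_unitary (u : unitary) : H :=
  match u with
  | UVenn _ Sh => sem_venn Sh
  | UEuler d => sem_euler d
  | UEulerVenn L Zv Sh => himp (sem_euler (Euler L Zv)) (sem_venn Sh)
  end.

Fixpoint sem (D : diagram) : H :=
  match D with
  | DUnit u => sem_unitary u
  | DAnd D1 D2 => hmeet (sem D1) (sem D2)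
  | DOr D1 D2 => hjoin (sem D1) (sem D2)
  | DImp D1 D2 => himp (sem D1) (sem D2)
  end.
End Sem.

(* Gamma => Delta, with finite multisets represented as lists *)
Definition valid (Gamma Delta : seq diagram) : Prop :=
  forall (H : heyting) (v : contour -> H),
    hle (bigmeet Gamma (sem v)) (bigjoin Delta (sem v)).

Definition wf_seq (s : seq diagram) : bool := all wf_diagram s.

Definition red_contours (d : euler) : seq contour :=
  [seq c <- enum_fset (eL d) | missing (euler_rem d c) != fset0].

(* Main.v *)
Require Import Defs.
From mathcomp Require Import all_boot.
From mathcomp Require Import finmap.
Set Implicit Arguments. Unset Strict Implicit. Unset Printing Implicit Defensive.
Local Open Scope fset_scope.

Section HL.
Variable H : heyting.
Implicit Types a b c d x y : H.
Local Notation le := (@hle H).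

Lemma le_refl a : le a a. Proof. exact: hle_refl. Qed.
Lemma le_tr a b c : le a b -> le b c -> le a c. Proof. exact: hle_trans. Qed.
Lemma meet_l a b : le (hmeet a b) a. Proof. by have /hmeetP[] := le_refl (hmeet a b). Qed.
Lemma meet_r a b : le (hmeet a b) b. Proof. by have /hmeetP[] := le_refl (hmeet a b). Qed.
Lemma meet_glb a b c : le c a -> le c b -> le c (hmeet a b). Proof. by move=> ? ?; apply/hmeetP. Qed.
Lemma join_l a b : le a (hjoin a b). Proof. by have /hjoinP[] := le_refl (hjoin a b). Qed.
Lemma join_r a b : le b (hjoin a b). Proof. by have /hjoinP[] := le_refl (hjoin a b). Qed.
Lemma join_lub a b c : le a c -> le b c -> le (hjoin a b) c. Proof. by move=> ? ?; apply/hjoinP. Qed.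
Lemma imp_intro c a b : le (hmeet c a) b -> le c (himp a b). Proof. by move/himpP. Qed.
Lemma mp c a b : le c a -> le c (himp a b) -> le c b.
Proof.
move=> ca cab; apply: le_tr (_ : le (hmeet (himp a b) a) b).
  exact: meet_glb.
by apply/himpP; apply: le_refl.
Qed.
Lemma meetC_le a b : le (hmeet a b) (hmeet b a).
Proof. apply: meet_glb; [exact: meet_r| exact: meet_l]. Qed.
Lemma join_case x a b d : le x (hjoin a b) -> le (hmeet x a) d -> le (hmeet x b) d -> le x d.
Proof.
move=> xab h1 h2.
have: le (hjoin a b) (himp x d).
  apply: join_lub; apply: imp_intro; apply: le_tr _ (meetC_le _ _) _; [exact h1|exact h2].
move=> hh; apply: mp (le_refl x) (le_tr xab hh).
Qed.
Lemma join_mono a b c d : le a c -> le b d -> le (hjoin a b) (hjoin c d).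
Proof. move=> ? ?; apply: join_lub; [apply: le_tr _ (join_l _ _)| apply: le_tr _ (join_r _ _)]; done. Qed.
Lemma top_ge a : le a (htop H). Proof. exact: htop_greatest. Qed.
Lemma bot_le a : le (hbot H) a. Proof. exact: hbot_least. Qed.

Section Big.
Variable T : Type.
Implicit Types (s : seq T) (f : T -> H).
Lemma bigmeet_cat s1 s2 f c : le c (bigmeet (s1 ++ s2) f) <-> le c (bigmeet s1 f) /\ le c (bigmeet s2 f).
Proof.
elim: s1 => [|x s IH] /=; first by split=> [h|[]//]; split=> //; exact: top_ge.
split.
  move/hmeetP=> [h1 /IH [h2 h3]]; split=> //; exact: meet_glb.
by move=> [/hmeetP [h1 h2] h3]; apply: meet_glb=> //; apply/IH.
Qed.
Lemma bigjoin_cat s1 s2 f c : le (bigjoin (s1 ++ s2) f) c <-> le (bigjoin s1 f) c /\ le (bigjoin s2 f) c.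
Proof.
elim: s1 => [|x s IH] /=; first by split=> [h|[]//]; split=> //; exact: bot_le.
split.
  move/hjoinP=> [h1 /IH [h2 h3]]; split=> //; exact: join_lub.
by move=> [/hjoinP [h1 h2] h3]; apply: join_lub=> //; apply/IH.
Qed.
Lemma bigmeet_map (U : Type) (g : U -> T) (s : seq U) f : bigmeet (map g s) f = bigmeet s (f \o g).
Proof. by elim: s => //= x s ->. Qed.
End Big.

Section BigEq.
Variable T : eqType.
Implicit Types (s : seq T) (f : T -> H).
Lemma bigmeetP s f c : le c (bigmeet s f) <-> (forall x : T, x \in s -> le c (f x)).
Proof.
elim: s => [|y s IH] /=; first by split=> // _; exact: top_ge.
split.
  move/hmeetP=> [h1 /IH h2] x; rewrite inE => /orP [/eqP->//|]; exact: h2.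
move=> h; apply: meet_glb; first by apply: h; rewrite inE eqxx.
by apply/IH=> x xs; apply: h; rewrite inE xs orbT.
Qed.
Lemma bigjoinP s f c : le (bigjoin s f) c <-> (forall x : T, x \in s -> le (f x) c).
Proof.
elim: s => [|y s IH] /=; first by split=> // _; exact: bot_le.
split.
  move/hjoinP=> [h1 /IH h2] x; rewrite inE => /orP [/eqP->//|]; exact: h2.
move=> h; apply: join_lub; first by apply: h; rewrite inE eqxx.
by apply/IH=> x xs; apply: h; rewrite inE xs orbT.
Qed.
Lemma bigmeet_le s f (x : T) : x \in s -> le (bigmeet s f) (f x).
Proof. by move=> xs; move: (le_refl (bigmeet s f)) => /bigmeetP; apply. Qed.
Lemma bigjoin_ge s f (x : T) : x \in s -> le (f x) (bigjoin s f).
Proof. by move=> xs; move: (le_refl (bigjoin s f)) => /bigjoinP; apply. Qed.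
Lemma bigjoin_meet s f a c : (forall x : T, x \in s -> le (hmeet (f x) a) c) -> le (hmeet (bigjoin s f) a) c.
Proof.
move=> h; apply/himpP/bigjoinP => x xs; apply/himpP; exact: h.
Qed.
Lemma join_bigmeet s f c D : (forall x : T, x \in s -> le c (hjoin D (f x))) -> le c (hjoin D (bigmeet s f)).
Proof.
elim: s => [|y s IH] h /=; first by apply: le_tr (top_ge c) (join_r _ _).
have h1 : le c (hjoin D (f y)) by apply: h; rewrite inE eqxx.
have h2 : le c (hjoin D (bigmeet s f)) by apply: IH => x xs; apply: h; rewrite inE xs orbT.
apply: join_case h1 _ _; first by apply: le_tr (meet_r _ _) (join_l _ _).
apply: join_case (le_tr (meet_l _ _) h2) _ _.
  by apply: le_tr (meet_r _ _) (join_l _ _).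
apply: le_tr _ (join_r _ _); apply: meet_glb.
  exact: le_tr (meet_l _ _) (meet_r _ _).
exact: meet_r.
Qed.
End BigEq.
End HL.


Lemma inEF (K : choiceType) (A : {fset K}) x : (x \in enum_fset A) = (x \in A). Proof. by []. Qed.

Lemma zones_overP L z : z \in zones_over L <-> (zin z `<=` L /\ zout z = L `\` zin z).
Proof.
case: z => a b; rewrite /zin /zout /=; split.
  by case/imfsetP => A /=; rewrite fpowersetE => sub [-> ->].
by move=> [sub ->]; apply/imfsetP; exists a => //=; rewrite fpowersetE.
Qed.

Lemma zone_eq L z z' : z \in zones_over L -> z' \in zones_over L -> zin z =i zin z' -> z = z'.
Proof.
move=> /zones_overP [_ e1] /zones_overP [_ e2] /fsetP e.
case: z z' e1 e2 e => a b [a' b']; rewrite /zin /zout /= => -> -> ->. done.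
Qed.

Section Sem.
Variables (H : heyting) (v : contour -> H).
Local Notation le := (@hle H).
Definition MM (A : {fset nat}) := bigmeet (enum_fset A) v.
Definition JJ (A : {fset nat}) := bigjoin (enum_fset A) v.

Lemma MP A c : le c (MM A) <-> (forall x, x \in A -> le c (v x)).
Proof. exact: bigmeetP. Qed.
Lemma JP A c : le (JJ A) c <-> (forall x, x \in A -> le (v x) c).
Proof. exact: bigjoinP. Qed.

Lemma mzoneE z : mzone v z = himp (MM (zin z)) (JJ (zout z)). Proof. by []. Qed.

Lemma mzone_combine c A B :
  le (hmeet (mzone v (c |` A, B)) (mzone v (A, c |` B))) (mzone v (A, B)).
Proof.
rewrite !mzoneE /zin /zout /=.
apply: imp_intro.
set Y := hmeet _ (MM A).
have YA : le Y (MM A) by exact: meet_r.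
have Y2 : le Y (JJ (c |` B)).
  apply: mp YA _; apply: le_tr (meet_l _ _) (meet_r _ _).
have : le Y (hjoin (JJ B) (v c)).
  apply: le_tr Y2 _; apply/JP => x; rewrite !inE => /orP [/eqP->|xB].
    exact: join_r.
  apply: le_tr (join_l _ _); exact: bigjoin_ge.
move/join_case; apply; first exact: meet_r.
apply: mp (le_tr (meet_l _ _) (le_tr (meet_l _ _) (meet_l _ _))).
apply/MP => x; rewrite !inE => /orP [/eqP->|xA]; first exact: meet_r.
apply: le_tr (meet_l _ _) (le_tr YA _); exact: bigmeet_le.
Qed.

Lemma mzone_rem_le z l : le (mzone v (zone_rem z l)) (mzone v z).
Proof.
rewrite !mzoneE /zone_rem /zin /zout /=; apply: imp_intro.
apply: le_tr (_ : le _ (JJ (z.2 `\ l))) _.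
  apply: mp (meet_l _ _); apply/MP => x; rewrite !inE => /andP [_ xi].
  apply: le_tr (meet_r _ _) _; exact: bigmeet_le.
apply/JP => x; rewrite !inE => /andP [_ xi]; exact: bigjoin_ge.
Qed.

Lemma redL_key d c : wf_euler d -> c \in eL d ->
  le (sem_euler v d) (sem_euler v (euler_rem d c)).
Proof.
move=> wf cL; rewrite /sem_euler; apply/bigmeetP => w.
rewrite inEF /missing /euler_rem /= in_fsetD => /andP [wnI wz].
move/zones_overP: wz => [wsub wout].
have inm : forall w', w' \in zones_over (eL d) -> zone_rem w' c = w -> w' \in missing d.
  move=> w' w'z e; rewrite /missing inE w'z andbT; apply/negP => w'Z.
  by move/negP: wnI; apply; apply/imfsetP; exists w'.
case: w {wnI} wsub wout inm => a b; rewrite /zin /zout /= => wsub wout inm.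
have ca : c \notin a by apply/negP => /(fsubsetP wsub); rewrite !inE eqxx.
have cb : c \notin b by rewrite wout !inE eqxx andbF.
have h1 : (c |` a, b) \in missing d.
  apply: inm.
    apply/zones_overP; rewrite /zin /zout /=; split.
      apply/fsubsetP => x; rewrite !inE => /orP [/eqP->//|/(fsubsetP wsub)].
      by rewrite !inE => /andP [].
    rewrite wout; apply/fsetP => x; rewrite !inE.
    by case: (x =P c) => [->|]; [rewrite cL /= ; case: (c \in a)|].
  rewrite /zone_rem /zin /zout /=.
  congr pair; apply/fsetP => x; rewrite !inE; case: (x =P c) => [->|//]; by rewrite ?(negbTE ca) ?(negbTE cb).
have h2 : (a, c |` b) \in missing d.
  apply: inm.
    apply/zones_overP; rewrite /zin /zout /=; split.
      apply/fsubsetP => x /(fsubsetP wsub); by rewrite !inE => /andP [].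
    rewrite wout; apply/fsetP => x; rewrite !inE.
    case: (x =P c) => [->|]; first by rewrite cL (negbTE ca).
    by [].
  rewrite /zone_rem /zin /zout /=.
  congr pair; apply/fsetP => x; rewrite !inE; case: (x =P c) => [->|//]; by rewrite ?(negbTE ca) ?(negbTE cb).
apply: le_tr (mzone_combine c a b).
apply: meet_glb; exact: bigmeet_le.
Qed.
End Sem.


Lemma rem_missing d z l : wf_euler d -> z \in missing d -> l \in eL d ->
  adj z l \in missing d -> zone_rem z l \in missing (euler_rem d l).
Proof.
move=> wf; rewrite /missing !in_fsetD => /andP [zZ zz] lL /andP [aZ az].
have zz' := zz; move/zones_overP: zz' => [].
case: z zZ zz aZ az => a b; rewrite /zin /zout /adj /= => zZ zz aZ az asub bE.
apply/andP; split; last first.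
  apply/zones_overP; rewrite /zin /zout /=; split.
    apply/fsubsetP => x; rewrite !inE => /andP [-> /(fsubsetP asub) ->]; done.
  rewrite bE; apply/fsetP => x; rewrite !inE.
  by case: (x =P l); case: (x \in a); case: (x \in eL d).
apply/negP => /imfsetP [z' z'Z e].
have z'z : z' \in zones_over (eL d) by apply: (fsubsetP wf).
have ei : zin z' `\ l = a `\ l by move: e; rewrite /zone_rem /= => -[->].
have ex : forall x, x != l -> (x \in zin z') = (x \in a).
  move=> x xl; move/fsetP: ei => /(_ x); by rewrite !inE xl.
case hl: ((l \in zin z') == (l \in a)).
  suff : (a, b) = z' by move=> eq; move: zZ; rewrite eq z'Z.
  apply: (zone_eq zz z'z) => x; rewrite /zin /=.
  case: (x =P l) => [->|/eqP xl]; [exact/esym/eqP | by rewrite ex].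
suff : (if l \in a then (a `\ l, l |` b) else (l |` a, b `\ l)) = z' by move=> eq; move: aZ; rewrite eq z'Z.
apply: (zone_eq az z'z) => x.
case: (x =P l) => [->|/eqP xl].
  move: hl; case: (l \in a); case: (l \in zin z') => //= _; by rewrite /zin /= !inE eqxx.
rewrite ex //; case: (l \in a); rewrite /zin /= !inE ?xl ?(negbTE xl) //=.
Qed.


Section S.
Variables (H : heyting) (v : contour -> H).
Local Notation le := (@hle H).

Lemma bigjoin_map (T U : Type) (g : U -> T) (s : seq U) (f : T -> H) :
  bigjoin (map g s) f = bigjoin s (f \o g).
Proof. by elim: s => //= x s ->. Qed.

Lemma app_join_le (T : Type) (D : seq T) x (f : T -> H) :
  le (bigjoin (D ++ [:: x]) f) (hjoin (bigjoin D f) (f x)).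
Proof.
apply/bigjoin_cat; split; first exact: join_l.
by apply: join_lub; [exact: join_r | exact: bot_le].
Qed.

Lemma app_join_ge (T : Type) (D : seq T) x (f : T -> H) :
  le (hjoin (bigjoin D f) (f x)) (bigjoin (D ++ [:: x]) f).
Proof.
have := le_refl (bigjoin (D ++ [:: x]) f); move/bigjoin_cat => [h1 h2].
apply: join_lub => //; apply: le_tr h2; exact: join_l.
Qed.

Lemma lit_le n : le (sem v (lit n)) (v n).
Proof.
rewrite /= /sem_venn; apply/bigjoinP => y; rewrite inEF in_fset1 => /eqP ->.
rewrite /zone_val /=; apply: le_tr (meet_l _ _) _; apply: bigmeet_le.
by rewrite inEF in_fset1 eqxx.
Qed.

Lemma lit_ge n : le (v n) (sem v (lit n)).
Proof.
rewrite /= /sem_venn; apply: le_tr (bigjoin_ge _ (_ : ([fset n], fset0) \in _)); last first.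
  by rewrite inEF in_fset1 eqxx.
rewrite /zone_val /=; apply: meet_glb.
  apply/bigmeetP => y; rewrite inEF in_fset1 => /eqP ->; exact: le_refl.
exact: top_ge.
Qed.
End S.

Theorem lemma8 :
  (* (a) redL and redR *)
  (forall (d : euler) (Gamma Delta : seq diagram),
     wf_euler d -> wf_seq Gamma -> wf_seq Delta ->
     (forall z, z \in missing d ->
        exists2 l, l \in eL d & adj z l \in missing d) ->
     (valid ([seq pure (euler_rem d c) | c <- red_contours d] ++ Gamma) Delta ->
      valid (pure d :: Gamma) Delta)
     /\
     ((forall c, c \in red_contours d ->
         valid Gamma (Delta ++ [:: pure (euler_rem d c)])) ->
      valid Gamma (Delta ++ [:: pure d])))
  /\
  (* (b) mzsepL and mzsepR *)
  (forall (L : contours) (Z Z1 Z2 : {fset zone}) (Gamma Delta : seq diagram),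
     wf_euler (Euler L Z) -> wf_euler (Euler L Z1) -> wf_euler (Euler L Z2) ->
     wf_seq Gamma -> wf_seq Delta ->
     1 < #|` missing (Euler L Z)| ->
     Z1 `&` Z2 = Z ->
     (valid (pure (Euler L Z1) :: pure (Euler L Z2) :: Gamma) Delta ->
      valid (pure (Euler L Z) :: Gamma) Delta)
     /\
     (valid Gamma (Delta ++ [:: pure (Euler L Z1)]) ->
      valid Gamma (Delta ++ [:: pure (Euler L Z2)]) ->
      valid Gamma (Delta ++ [:: pure (Euler L Z)])))
  /\
  (* (c) impdecL and impdecR *)
  (forall (d : euler) (z : zone) (Gamma Delta : seq diagram),
     wf_euler d -> wf_seq Gamma -> wf_seq Delta ->
     missing d = [fset z] ->
     ((forall n, n \in zin z -> valid (pure d :: Gamma) [:: lit n]) ->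
      (forall o, o \in zout z -> valid (lit o :: Gamma) Delta) ->
      valid (pure d :: Gamma) Delta)
     /\
     (valid ([seq lit n | n <- enum_fset (zin z)] ++ Gamma)
            [seq lit o | o <- enum_fset (zout z)] ->
      valid Gamma (Delta ++ [:: pure d]))).
Proof.
split; [|split].
- move=> d G D wf _ _ hadj; split.
    move=> hv H v; apply: le_tr (hv H v); apply/bigmeet_cat; split; last exact: meet_r.
    rewrite bigmeet_map; apply/bigmeetP => c; rewrite mem_filter => /andP [_ cL].
    apply: le_tr (meet_l _ _) _; exact: redL_key.
  move=> h H v; apply: le_tr (app_join_ge _ _ _); rewrite /= /sem_euler.
  apply: join_bigmeet => z; rewrite inEF => zm.
  have [l lL am] := hadj z zm.
  have rm := rem_missing wf zm lL am.
  have lr : l \in red_contours d.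
    rewrite mem_filter inEF lL andbT; apply/eqP => e; by rewrite e in_fset0 in rm.
  apply: le_tr (h l lr H v) _; apply: le_tr (app_join_le _ _ _) _.
  apply: join_mono; first exact: le_refl.
  apply: le_tr (mzone_rem_le v z l); exact: bigmeet_le.
- move=> L Z Z1 Z2 G D _ _ _ _ _ _ eZ.
  have m1 : forall x, x \in missing (Euler L Z1) -> x \in missing (Euler L Z).
    by move=> x; rewrite /missing /= -eZ !inE negb_and; case/andP => -> ->.
  have m2 : forall x, x \in missing (Euler L Z2) -> x \in missing (Euler L Z).
    by move=> x; rewrite /missing /= -eZ !inE negb_and; case/andP => -> ->; rewrite orbT.
  have m12 : forall x, x \in missing (Euler L Z) -> (x \in missing (Euler L Z1)) || (x \in missing (Euler L Z2)).
    move=> x; rewrite /missing /= -eZ !inE negb_and; case/andP => /orP [] h hz; by rewrite h hz ?orbT.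
  split.
    move=> hv H v; apply: le_tr (hv H v); rewrite /=.
    apply: meet_glb; [|apply: meet_glb; last exact: meet_r];
    apply: le_tr (meet_l _ _) _; apply/bigmeetP => x; rewrite inEF => xm; apply: bigmeet_le.
      exact: m1.
    exact: m2.
  move=> h1 h2 H v; apply: le_tr (app_join_ge _ _ _); rewrite /= /sem_euler.
  apply: join_bigmeet => x; rewrite inEF => /m12 /orP [xm|xm].
    apply: le_tr (h1 H v) _; apply: le_tr (app_join_le _ _ _) _.
    apply: join_mono; first exact: le_refl; exact: bigmeet_le.
  apply: le_tr (h2 H v) _; apply: le_tr (app_join_le _ _ _) _.
  apply: join_mono; first exact: le_refl; exact: bigmeet_le.
- move=> d z G D _ _ _ em.
  have zm : z \in enum_fset (missing d) by rewrite inEF em in_fset1 eqxx.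
  split.
    move=> h1 h2 H v; rewrite /=.
    set X := hmeet _ _.
    have Xd : hle X (mzone v z) by apply: le_tr (meet_l _ _) _; exact: bigmeet_le.
    have Xin : hle X (MM v (zin z)).
      apply/MP => n nin; apply: le_tr (h1 n nin H v) _; apply: join_lub; [exact: lit_le|exact: bot_le].
    have Xout : hle X (JJ v (zout z)) by apply: mp Xin Xd.
    apply: le_tr (_ : hle X (hmeet (JJ v (zout z)) (bigmeet G (sem v)))) _.
      by apply: meet_glb => //; exact: meet_r.
    apply: bigjoin_meet => o oin; apply: le_tr (h2 o oin H v).
    apply: meet_glb; last exact: meet_r.
    apply: le_tr (meet_l _ _) _; exact: lit_ge.
  move=> h H v; apply: le_tr (app_join_ge _ _ _); apply: le_tr (join_r _ _).
  rewrite /= /sem_euler; apply/bigmeetP => x; rewrite inEF em in_fset1 => /eqP ->.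
  rewrite mzoneE; apply: imp_intro.
apply: le_tr (_ : hle _ (bigmeet ([seq lit n | n <- enum_fset (zin z)] ++ G) (sem v))) _; last first.
    apply: le_tr (h H v) _.
    rewrite bigjoin_map; apply/bigjoinP => o oin; apply: le_tr (lit_le _ _) _; exact: bigjoin_ge.
  apply/bigmeet_cat; split; last exact: meet_l.
  rewrite bigmeet_map; apply/bigmeetP => n nin; apply: le_tr (lit_ge v n).
  apply: le_tr (meet_r _ _) _; exact: bigmeet_le.
Qed.
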